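(* Let $0<q<1$ and write $z=a+\sqrt{-1}\,b$ with $a,b\in\mathbb{R}$. There exist positive constants $c_1=c_1(q)$, $c_2=c_2(q)$ such that: (i) if $a\le-1$, then $|(z;q)_\infty|\ge c_1\exp[c_2\log^2|a|]$; (ii) if $a<1$ and $|b|>1$, then $|(z;q)_\infty|\ge c_1\exp[c_2\log^2|b|]$; (iii) if $a>1$, then $|(z;q)_\infty|\ge c_1\,\max\big(b^2,\,(q^{\alpha-1}-1)(1-q^{\alpha})\big)\exp[c_2\log^2|a|]$, where $\alpha=\lceil\log_{q^{-1}}a\rceil-\log_{q^{-1}}a\in[0,1)$.
   Context: $(z;q)_\infty=\prod_{j\ge0}(1-zq^j)$; $\lceil x\rceil$ is the smallest integer $\ge x$. *)

(* Defs.v *)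
From Stdlib Require Import Reals.
From Coquelicot Require Import Coquelicot.
Open Scope R_scope.

Fixpoint qpoch_partial (z : C) (q : R) (n : nat) : C :=
  match n with
  | O => RtoC 1
  | S m => Cmult (qpoch_partial z q m) (Cminus (RtoC 1) (Cmult z (RtoC (q ^ m))))
  end.

Definition is_qpoch (z : C) (q : R) (P : C) : Prop :=
  filterlim (qpoch_partial z q) eventually (locally P).

(* ceiling: smallest integer >= x  (Int_part is the floor). *)
Definition Rceil (x : R) : R := - IZR (Int_part (- x)).

Definition logb (c x : R) : R := ln x / ln c.

(* Main.v *)
Require Import Defs.
From Stdlib Require Import Reals Lra Lia ZArith.
From Coquelicot Require Import Coquelicot.
Open Scope R_scope.


Lemma exp_le_mono x y : x <= y -> exp x <= exp y.
Proof. intros H; destruct (Rle_lt_or_eq _ _ H) as [H'|H']. left; now apply exp_increasing. subst; lra. Qed.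

Fixpoint prodR (g : nat -> R) (n : nat) : R :=
  match n with O => 1 | S m => prodR g m * g m end.

Lemma prodR_ext g h n : (forall j, (j < n)%nat -> g j = h j) -> prodR g n = prodR h n.
Proof. induction n; simpl; intros H; auto. rewrite IHn by (intros; apply H; lia). rewrite H by lia. auto. Qed.

Lemma prodR_add g m n : prodR g (m + n) = prodR g m * prodR (fun j => g (m + j)%nat) n.
Proof. induction n; simpl. rewrite Nat.add_0_r; ring. rewrite Nat.add_succ_r; simpl. rewrite IHn; ring. Qed.

Lemma prodR_shift g n : prodR g (S n) = g O * prodR (fun j => g (S j)) n.
Proof. change (S n) with (1 + n)%nat. rewrite prodR_add. simpl. ring. Qed.

Lemma prodR_mono g h n : (forall j, (j < n)%nat -> 0 <= h j <= g j) -> 0 <= prodR h n <= prodR g n.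
Proof. induction n; simpl; intros H. lra.
  destruct IHn as [A B]. intros; apply H; lia. destruct (H n ltac:(lia)) as [C D].
  split. apply Rmult_le_pos; auto. apply Rmult_le_compat; auto. Qed.

Lemma prodR_mult g h n : prodR (fun j => g j * h j) n = prodR g n * prodR h n.
Proof. induction n; simpl. ring. rewrite IHn; ring. Qed.

Lemma prodR_const c n : prodR (fun _ => c) n = c ^ n.
Proof. induction n; simpl. auto. rewrite IHn; ring. Qed.

Lemma prodR_le1 g n : (forall j, (j < n)%nat -> 0 <= g j <= 1) -> 0 <= prodR g n <= 1.
Proof. intros H. replace 1 with (prodR (fun _ => 1) n). apply prodR_mono; auto.
  rewrite prodR_const; apply pow1. Qed.

Lemma prodR_anti g n n' : (forall j, 0 <= g j <= 1) -> (n <= n')%nat -> prodR g n' <= prodR g n.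
Proof. intros H Hn. replace n' with (n + (n' - n))%nat by lia. rewrite prodR_add.
  assert (A := prodR_le1 g n ltac:(intros; apply H)).
  assert (B := prodR_le1 (fun j => g (n + j)%nat) (n' - n) ltac:(intros; apply H)).
  nra. Qed.

Lemma Cmod_partial z q n : Cmod (qpoch_partial z q n) = prodR (fun j => Cmod (Cminus (RtoC 1) (Cmult z (RtoC (q ^ j))))) n.
Proof. induction n; simpl. apply Cmod_1. rewrite Cmod_mult, IHn. auto. Qed.

Lemma factor_eq a b t : Cmod (Cminus (RtoC 1) (Cmult (a, b) (RtoC t))) = sqrt ((1 - a * t) ^ 2 + (b * t) ^ 2).
Proof. unfold Cmod, Cminus, Cmult, Cplus, Copp, RtoC; simpl. f_equal. ring. Qed.

Lemma le_sqrt u s : 0 <= u -> u * u <= s -> u <= sqrt s.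
Proof. intros H1 H2. rewrite <- (sqrt_square u H1). now apply sqrt_le_1_alt. Qed.

Lemma factor_ge_re a b t : Rabs (1 - a * t) <= Cmod (Cminus (RtoC 1) (Cmult (a, b) (RtoC t))).
Proof. rewrite factor_eq. apply le_sqrt. apply Rabs_pos.
  replace (Rabs (1 - a * t) * Rabs (1 - a * t)) with ((1 - a*t)*(1-a*t)) by (rewrite <- Rabs_mult; symmetry; apply Rabs_pos_eq; pose proof (Rle_0_sqr (1-a*t)); unfold Rsqr in *; lra).
  assert (0 <= (b*t)^2) by apply pow2_ge_0. replace ((1-a*t)^2) with ((1-a*t)*(1-a*t)) by ring. lra. Qed.

Lemma factor_ge_im a b t : 0 <= t -> Rabs b * t <= Cmod (Cminus (RtoC 1) (Cmult (a, b) (RtoC t))).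
Proof. intros Ht. rewrite factor_eq. apply le_sqrt. apply Rmult_le_pos; auto using Rabs_pos.
  replace (Rabs b * t * (Rabs b * t)) with ((Rabs b * Rabs b) * (t*t)) by ring.
  rewrite <- Rabs_mult, Rabs_pos_eq by (pose proof (Rle_0_sqr b); unfold Rsqr in *; lra).
  assert (0 <= (1-a*t)^2) by apply pow2_ge_0.
  assert (0 <= b*b) by (pose proof (Rle_0_sqr b); unfold Rsqr in *; lra).
  replace ((b*t)^2) with ((b*b)*(t*t)) by ring. lra. Qed.

Lemma lim_lower z q P L : is_qpoch z q P ->
  (exists N, forall n, (n >= N)%nat -> L <= Cmod (qpoch_partial z q n)) -> L <= Cmod P.
Proof. intros HP [N HN].
  assert (Hl : is_lim_seq (fun n => Cmod (qpoch_partial z q n)) (Cmod P)).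
  { unfold is_lim_seq. eapply filterlim_comp. apply HP. apply (filterlim_norm (K:=C_AbsRing) (V:=C_NormedModule) P). }
  assert (H := is_lim_seq_le_loc (fun _ => L) (fun n => Cmod (qpoch_partial z q n)) L (Cmod P)).
  simpl in H. apply H; auto. exists N; auto. apply is_lim_seq_const. Qed.


Lemma pow_le1 x n : 0 <= x <= 1 -> x ^ n <= 1.
Proof. intros H. rewrite <- (pow1 n). apply pow_incr. lra. Qed.

Lemma keyA L u : 0 < L ->
  exp (/(2*L) * (Rmax 0 u)^2) <= Rmax 1 (exp u) * exp (/(2*L) * (Rmax 0 (u - L))^2).
Proof. intros HL.
  assert (Hc : 0 < /(2*L)) by (apply Rinv_0_lt_compat; lra).
  destruct (Rle_or_lt u 0) as [H|H].
  - rewrite (Rmax_left 0 u) by lra. rewrite (Rmax_left 0 (u-L)) by lra.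
    replace (/(2*L) * 0^2) with 0 by ring. rewrite exp_0. pose proof (Rmax_l 1 (exp u)). lra.
  - assert (E1 : 1 < exp u) by (rewrite <- exp_0; apply exp_increasing; lra).
    rewrite (Rmax_right 1 (exp u)) by lra. rewrite (Rmax_right 0 u) by lra.
    rewrite <- exp_plus. apply exp_le_mono.
    destruct (Rle_or_lt (u - L) 0) as [H2|H2].
    + rewrite (Rmax_left 0 (u-L)) by lra.
      assert (/(2*L) * u <= 1/2). { apply (Rmult_le_reg_l (2*L)). lra. field_simplify; lra. }
      nra.
    + rewrite (Rmax_right 0 (u-L)) by lra.
      assert (Hk : /(2*L) * L = 1/2) by (field; lra).
      assert (0 <= /(2*L) * L^2) by (apply Rmult_le_pos; [lra| apply pow2_ge_0]).
      replace (u + /(2*L) * (u-L)^2) with (/(2*L) * u^2 + u * (1 - 2 * (/(2*L) * L)) + /(2*L) * L^2) by ring.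
      rewrite Hk. lra.
Qed.

Lemma growthA q (hq0 : 0 < q) (hq1 : q < 1) : forall n y, 0 < y -> y * q^n < 1 ->
  exp (/(2*(- ln q)) * (Rmax 0 (ln y))^2) <= prodR (fun j => Rmax 1 (y * q^j)) n.
Proof.
  assert (Hlq : ln q < 0) by (rewrite <- ln_1; apply ln_increasing; lra).
  induction n; intros y Hy Hn.
  - simpl prodR. rewrite pow_O, Rmult_1_r in Hn. assert (ln y < 0) by (rewrite <- ln_1; apply ln_increasing; lra).
    rewrite Rmax_left by lra. replace (/(2 * - ln q) * 0^2) with 0 by ring. rewrite exp_0. lra.
  - rewrite prodR_shift.
    rewrite (prodR_ext _ (fun j => Rmax 1 ((y*q) * q^j))) by (intros; simpl; f_equal; ring).
    assert (IH := IHn (y*q) ltac:(apply Rmult_lt_0_compat; lra) ltac:(simpl in Hn; lra)).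
    rewrite ln_mult in IH by lra.
    replace (ln y + ln q) with (ln y - - ln q) in IH by ring.
    replace (y * q^0) with y by (simpl; ring).
    eapply Rle_trans. 2: { apply Rmult_le_compat_l. apply Rle_trans with 1; [lra|apply Rmax_l]. exact IH. }
    pose proof (keyA (- ln q) (ln y) ltac:(lra)). rewrite exp_ln in H by lra. exact H.
Qed.

Lemma weier q (hq0 : 0 < q) (hq1 : q < 1) t : 0 <= t <= 1 -> forall r,
  1 - t * ((1 - q^r)/(1-q)) <= prodR (fun i => 1 - t * q^i) r.
Proof. intros Ht. induction r; simpl.
  - replace ((1-1)/(1-q)) with 0 by (field; lra). lra.
  - assert (Hqr : 0 < q^r) by (apply pow_lt; lra).
    assert (Hqr1 : q^r <= 1) by (apply pow_le1; lra).
    assert (HB : (1 - q * q^r)/(1-q) = (1 - q^r)/(1-q) + q^r) by (field; lra).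
    rewrite HB. set (A := (1 - q^r)/(1-q)) in *.
    assert (HA : 0 <= A) by (unfold A; apply Rmult_le_pos; [lra| left; apply Rinv_0_lt_compat; lra]).
    assert (Hp : 0 <= prodR (fun i => 1 - t * q^i) r).
    { refine (proj1 (prodR_mono (fun i => 1 - t * q^i) _ r _)). intros; split; [|lra]. assert (q^j <= 1) by (apply pow_le1; lra). assert (0 <= q^j) by (apply pow_le; lra). nra. }
    destruct (Rle_or_lt 0 (1 - t*A)).
    + assert (0 <= (1-t)*q^r) by (apply Rmult_le_pos; lra).
      assert (0 <= 1 - t * q^r) by lra.
      assert (0 <= t*A*(t*q^r)) by (apply Rmult_le_pos; [apply Rmult_le_pos|apply Rmult_le_pos]; lra).
      apply Rle_trans with ((1 - t*A)*(1 - t*q^r)). replace ((1-t*A)*(1-t*q^r)) with (1 - t*(A+q^r) + t*A*(t*q^r)) by ring; lra. apply Rmult_le_compat_r; lra.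
    + assert (0 <= t * q^r) by (apply Rmult_le_pos; lra).
      assert (0 <= prodR (fun i => 1 - t * q ^ i) r * (1 - t * q^r)) by (apply Rmult_le_pos; [lra| assert (0 <= (1-t)*(q^r)) by (apply Rmult_le_pos; lra); lra]).
      assert (0 <= t * A) by (apply Rmult_le_pos; lra). lra.
Qed.

Lemma Qbound q (hq0 : 0 < q) (hq1 : q < 1) : exists Q, 0 < Q <= 1 /\
  forall m, Q <= prodR (fun i => 1 - q^(S i)) m.
Proof.
  destruct (pow_lt_1_zero q ltac:(rewrite Rabs_pos_eq; lra) ((1-q)/2) ltac:(lra)) as [J HJ].
  specialize (HJ J (le_n _)). rewrite Rabs_pos_eq in HJ by (apply pow_le; lra).
  assert (HqJ : 0 < q^J) by (apply pow_lt; lra).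
  assert (Hg : forall i, 0 <= 1 - q^(S i) <= 1).
  { intros i. assert (0 < q^(S i)) by (apply pow_lt; lra). assert (q^(S i) <= 1) by (apply pow_le1; lra). lra. }
  assert (H1J : 0 < (1-q)^J) by (apply pow_lt; lra).
  assert (H1J' : (1-q)^J <= 1) by (apply pow_le1; lra).
  exists ((1-q)^J / 2). split. lra.
  intros m. eapply Rle_trans. 2: apply (prodR_anti _ m (J + m)); [exact Hg| lia].
  rewrite prodR_add.
  assert (A : (1-q)^J <= prodR (fun i => 1 - q^(S i)) J).
  { rewrite <- prodR_const. apply prodR_mono. intros j _. split. lra.
    assert (q^j <= 1) by (apply pow_le1; lra). simpl. nra. }
  set (t := q^(S J)).
  assert (Ht : t <= q^J) by (unfold t; simpl; nra).
  assert (Ht0 : 0 < t) by (unfold t; apply pow_lt; lra).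
  rewrite (prodR_ext (fun j => (fun i => 1 - q^(S i)) (J + j)%nat) (fun j => 1 - t * q^j) m).
  2:{ intros j _. unfold t. replace (S (J + j)) with (S J + j)%nat by lia; rewrite pow_add; ring. }
  assert (B := weier q hq0 hq1 t ltac:(lra) m).
  set (Bm := (1 - q^m)/(1-q)) in B.
  assert (HBm : Bm * (1-q) = 1 - q^m) by (unfold Bm; field; lra).
  assert (Hqm : 0 < q^m) by (apply pow_lt; lra).
  assert (Hqm1 : q^m <= 1) by (apply pow_le1; lra).
  assert (HtB : t * Bm <= 1/2).
  { apply (Rmult_le_reg_r (1-q)). lra. rewrite Rmult_assoc, HBm. nra. }
  assert (C : 1/2 <= prodR (fun j => 1 - t * q^j) m) by lra.
  replace ((1-q)^J/2) with ((1-q)^J * (1/2)) by field.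
  apply Rmult_le_compat; lra.
Qed.


Definition cc q := /(2*(- ln q)).

Lemma prodR_le g h n : (forall j, (j < n)%nat -> 0 <= h j <= g j) -> prodR h n <= prodR g n.
Proof. intros H; apply (prodR_mono g h n H). Qed.

Lemma ln_ge0 y : 1 <= y -> 0 <= ln y.
Proof. intros H. destruct (Rle_lt_or_eq _ _ H) as [H'|H']. left; rewrite <- ln_1; apply ln_increasing; lra. subst; rewrite ln_1; lra. Qed.

Lemma case1 q (hq0 : 0 < q) (hq1 : q < 1) a b P : is_qpoch (a,b) q P -> a <= -1 ->
  exp (cc q * (ln (Rabs a))^2) <= Cmod P.
Proof. intros HP Ha. apply (lim_lower _ _ _ _ HP).
  assert (Habs : Rabs a = - a) by (apply Rabs_left; lra).
  destruct (pow_lt_1_zero q ltac:(rewrite Rabs_pos_eq; lra) (/Rabs a) ltac:(apply Rinv_0_lt_compat; lra)) as [N HN].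
  exists N; intros n Hn. rewrite Cmod_partial.
  apply Rle_trans with (prodR (fun j => Rmax 1 (Rabs a * q^j)) n).
  - specialize (HN n Hn). rewrite Rabs_pos_eq in HN by (apply pow_le; lra).
    assert (Hy : Rabs a * q^n < 1). { apply (Rmult_lt_compat_l (Rabs a)) in HN; [|lra]. rewrite Rinv_r in HN; lra. }
    pose proof (growthA q hq0 hq1 n (Rabs a) ltac:(lra) Hy) as G.
    rewrite (Rmax_right 0) in G by (apply ln_ge0; lra). exact G.
  - apply prodR_le. intros j _. split. apply Rle_trans with 1; [lra|apply Rmax_l].
    eapply Rle_trans. 2: apply factor_ge_re.
    assert (0 < q^j) by (apply pow_lt; lra).
    rewrite Habs. rewrite Rabs_pos_eq by nra. apply Rmax_lub; nra.
Qed.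

Lemma case2 q (hq0 : 0 < q) (hq1 : q < 1) Q (HQ : 0 < Q)
  (HQb : forall m, Q <= prodR (fun i => 1 - q^(S i)) m) a b P :
  is_qpoch (a,b) q P -> a < 1 -> Rabs b > 1 ->
  Q * exp (cc q * (ln (Rabs b))^2) <= Cmod P.
Proof. intros HP Ha Hb. apply (lim_lower _ _ _ _ HP).
  destruct (pow_lt_1_zero q ltac:(rewrite Rabs_pos_eq; lra) (/Rabs b) ltac:(apply Rinv_0_lt_compat; lra)) as [N HN].
  exists (S N); intros n Hn. destruct n as [|n']. lia.
  rewrite Cmod_partial.
  set (h := fun j => match j with O => 1 | S i => 1 - q^(S i) end).
  apply Rle_trans with (prodR (fun j => h j * Rmax 1 (Rabs b * q^j)) (S n')).
  - rewrite prodR_mult.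
    assert (H1 : Q <= prodR h (S n')).
    { rewrite prodR_shift. simpl (h O). rewrite Rmult_1_l. apply HQb. }
    assert (H2 : exp (cc q * (ln (Rabs b))^2) <= prodR (fun j => Rmax 1 (Rabs b * q^j)) (S n')).
    { specialize (HN (S n') ltac:(lia)). rewrite Rabs_pos_eq in HN by (apply pow_le; lra).
      assert (Hy : Rabs b * q^(S n') < 1). { apply (Rmult_lt_compat_l (Rabs b)) in HN; [|lra]. rewrite Rinv_r in HN; lra. }
      pose proof (growthA q hq0 hq1 (S n') (Rabs b) ltac:(lra) Hy) as G.
      rewrite (Rmax_right 0) in G by (apply ln_ge0; lra). exact G. }
    assert (0 < exp (cc q * (ln (Rabs b))^2)) by apply exp_pos.
    apply Rmult_le_compat; lra.
  - apply prodR_le. intros j _.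
    assert (Hqj : 0 < q^j) by (apply pow_lt; lra).
    assert (Hqj1 : q^j <= 1) by (apply pow_le1; lra).
    pose proof (factor_ge_im a b (q^j) ltac:(lra)) as Im.
    pose proof (factor_ge_re a b (q^j)) as Re.
    destruct j as [|i].
    + simpl (h O). rewrite !pow_O in *. rewrite Rmult_1_r in *. rewrite Rmax_right by lra. split; [lra|]. rewrite Rmult_1_l. exact Im.
    + change (h (S i)) with (1 - q^(S i)).
      assert (Hh : 0 <= 1 - q^(S i) <= 1) by lra.
      assert (HR : 1 - q^(S i) <= Rabs (1 - a * q^(S i))).
      { rewrite Rabs_pos_eq by nra. nra. }
      destruct (Rle_or_lt (Rabs b * q^(S i)) 1) as [Hx|Hx].
      * rewrite Rmax_left by lra. lra.
      * rewrite Rmax_right by lra. split. nra. nra.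
Qed.


Lemma ceil_facts q a : 0 < q -> q < 1 -> a > 1 -> exists m,
  Rpower q (Rceil (logb (/q) a) - logb (/q) a) = a * q^(S m) /\
  Rpower q (Rceil (logb (/q) a) - logb (/q) a - 1) = a * q^m /\
  q < a * q^(S m) <= 1.
Proof. intros hq0 hq1 Ha.
  assert (Hlq : ln q < 0) by (rewrite <- ln_1; apply ln_increasing; lra).
  assert (Hla : 0 < ln a) by (rewrite <- ln_1; apply ln_increasing; lra).
  assert (Hli : ln (/q) = - ln q) by (apply ln_Rinv; lra).
  set (x := logb (/q) a).
  assert (Hx : ln a = - x * ln q) by (unfold x, logb; rewrite Hli; field; lra).
  assert (Hx0 : 0 < x) by (unfold x, logb; rewrite Hli; apply Rdiv_lt_0_compat; lra).
  destruct (base_Int_part (- x)) as [B1 B2].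
  set (K := Int_part (- x)) in *.
  assert (HK : (K < 0)%Z) by (apply lt_IZR; simpl; lra).
  set (k := Z.to_nat (- K)).
  assert (Hk : INR k = - IZR K) by (unfold k; rewrite INR_IZR_INZ, Z2Nat.id by lia; apply opp_IZR).
  assert (Hk1 : (1 <= k)%nat) by (unfold k; lia).
  exists (pred k). replace (S (pred k)) with k by lia.
  assert (Halpha : Rceil x - x = INR k - x) by (unfold Rceil; fold K; rewrite Hk; ring).
  rewrite Halpha.
  assert (Hs : Rpower q (INR k - x) = a * q^k).
  { rewrite <- (Rpower_pow k q hq0). unfold Rpower. rewrite <- (exp_ln a) by lra.
    rewrite <- exp_plus. f_equal. rewrite Hx. ring. }
  split; [exact Hs|]. split.
  - unfold Rpower in *. replace ((INR k - x - 1) * ln q) with ((INR k - x) * ln q + - ln q) by ring.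
    rewrite exp_plus, Hs, exp_Ropp, exp_ln by lra.
    replace k with (S (pred k)) at 1 by lia. simpl. field. lra.
  - rewrite <- Hs. unfold Rpower. split.
    + rewrite <- (exp_ln q) at 1 by lra. apply exp_increasing. nra.
    + rewrite <- exp_0. apply exp_le_mono. nra.
Qed.

Lemma prodR_rev q m : prodR (fun j => 1 - q^(m - j)) m = prodR (fun i => 1 - q^(S i)) m.
Proof. induction m. reflexivity.
  rewrite prodR_shift.
  change (prodR (fun i => 1 - q^(S i)) (S m)) with (prodR (fun i => 1 - q^(S i)) m * (1 - q^(S m))).
  rewrite <- IHm. replace (S m - 0)%nat with (S m) by lia.
  change (prodR (fun j => 1 - q^(S m - S j)) m) with (prodR (fun j => 1 - q^(m - j)) m). ring. Qed.

Lemma case3 q (hq0 : 0 < q) (hq1 : q < 1) Q (HQ : 0 < Q)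
  (HQb : forall m, Q <= prodR (fun i => 1 - q^(S i)) m) a b P :
  is_qpoch (a,b) q P -> a > 1 ->
  let alpha := Rceil (logb (/ q) a) - logb (/ q) a in
  Q^2 * q^2 * Rmax (b ^ 2) ((Rpower q (alpha - 1) - 1) * (1 - Rpower q alpha))
    * (exp (cc q * (ln a)^2) / a^2) <= Cmod P.
Proof. intros HP Ha. cbv zeta.
  destruct (ceil_facts q a hq0 hq1 Ha) as [m [Hs [Ht Hsb]]].
  rewrite Hs, Ht.
  set (s := a * q^(S m)) in *. set (t := a * q^m) in *.
  assert (Hts : s = t * q) by (unfold s, t; simpl; ring).
  assert (Ht1 : 1 <= t) by nra.
  assert (Htq : t * q <= 1) by lra.
  set (E := exp (cc q * (ln a)^2)).
  assert (HE : 0 < E) by apply exp_pos.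
  set (M := (t - 1) * (1 - s)).
  assert (HM : 0 <= M) by (unfold M; apply Rmult_le_pos; lra).
  set (W := Rmax (b^2) M).
  assert (HW : 0 <= W) by (unfold W; apply Rle_trans with M; [lra|apply Rmax_r]).
  apply (lim_lower _ _ _ _ HP). exists (m + 2)%nat. intros n Hn.
  replace n with (m + S (S (n - m - 2)))%nat by lia. set (r := (n - m - 2)%nat).
  rewrite Cmod_partial, prodR_add, prodR_shift, prodR_shift. cbv beta.
  set (F := fun j => Cmod (Cminus (RtoC 1) (Cmult (a, b) (RtoC (q ^ j))))).
  change (prodR F m * (F (m + 0)%nat * (F (m + 1)%nat * prodR (fun j => F (m + S (S j)))%nat r))) with
    (prodR F m * (F (m + 0)%nat * (F (m + 1)%nat * prodR (fun j => F (m + S (S j))%nat) r))).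
  assert (Hqm : 0 < q^m) by (apply pow_lt; lra).
  assert (Ha0 : 0 < a) by lra.
  pose proof (Rabs_pos b) as Hb0.
  set (X2 := Rmax (t - 1) (Rabs b * q^m)).
  set (X3 := Rmax (1 - s) (Rabs b * q^(S m))).
  assert (C2 : X2 <= Cmod (Cminus (RtoC 1) (Cmult (a, b) (RtoC (q ^ (m + 0)))))).
  { rewrite Nat.add_0_r. apply Rmax_lub.
    - eapply Rle_trans. 2: apply factor_ge_re. fold t. rewrite Rabs_left1 by lra. lra.
    - apply factor_ge_im. lra. }
  assert (C3 : X3 <= Cmod (Cminus (RtoC 1) (Cmult (a, b) (RtoC (q ^ (m + 1)))))).
  { replace (m + 1)%nat with (S m) by lia. apply Rmax_lub.
    - eapply Rle_trans. 2: apply factor_ge_re. fold s. rewrite Rabs_pos_eq by lra. lra.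
    - apply factor_ge_im. apply pow_le; lra. }
  assert (C4 : Q <= prodR (fun j => Cmod (Cminus (RtoC 1) (Cmult (a, b) (RtoC (q ^ (m + S (S j))))))) r).
  { eapply Rle_trans; [apply (HQb r)| apply prodR_le]. intros j _.
    assert (FF := factor_ge_re a b (q^(m + S (S j)))).
    replace (a * q^(m + S (S j))) with (s * q^(S j)) in FF by (unfold s; replace (m + S (S j))%nat with (S m + S j)%nat by lia; rewrite pow_add; ring).
    assert (0 < q^(S j)) by (apply pow_lt; lra). assert (q^(S j) <= 1) by (apply pow_le1; lra).
    rewrite Rabs_pos_eq in FF by nra. split; nra. }
  assert (C1 : Q * (q * E) <= prodR F m).
  { apply Rle_trans with (prodR (fun j => Rmax 1 (a * q^j) * (1 - q^(m - j))) m).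
    2:{ apply prodR_le. intros j Hj.
        assert (Hp : q^m = q^j * q^(m-j)) by (rewrite <- pow_add; f_equal; lia).
        assert (0 < q^(m-j)) by (apply pow_lt; lra). assert (q^(m-j) <= 1) by (apply pow_le1; lra).
        assert (0 < q^j) by (apply pow_lt; lra).
        assert (0 <= a*q^j*(1-q^(m-j))) by (apply Rmult_le_pos; [apply Rmult_le_pos|]; lra).
        assert (Haj : t <= a * q^j) by (unfold t; rewrite Hp; replace (a*(q^j*q^(m-j))) with (a*q^j - a*q^j*(1-q^(m-j))) by ring; lra).
        rewrite Rmax_right by lra. split. nra.
        unfold F. eapply Rle_trans. 2: apply factor_ge_re. rewrite Rabs_left1 by lra.
        replace (a * q^j * (1 - q^(m-j))) with (a * q^j - t) by (unfold t; rewrite Hp; ring). lra. }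
    rewrite prodR_mult, prodR_rev.
    assert (G := growthA q hq0 hq1 (S (S m)) a Ha0 ltac:(change (a * (q * q^(S m)) < 1); replace (a * (q * q^(S m))) with (s*q) by (unfold s; simpl; ring); nra)).
    rewrite (Rmax_right 0) in G by (apply ln_ge0; lra).
    change (prodR (fun j => Rmax 1 (a * q^j)) (S (S m))) with
      (prodR (fun j => Rmax 1 (a * q^j)) m * Rmax 1 (a * q^m) * Rmax 1 (a * q^(S m))) in G.
    fold s t in G. rewrite (Rmax_right 1 t), (Rmax_left 1 s) in G by lra.
    fold (cc q) in G. fold E in G.
    set (PR := prodR (fun j => Rmax 1 (a * q^j)) m) in *.
    assert (HPR : 0 <= PR). { unfold PR. refine (proj1 (prodR_mono (fun j => Rmax 1 (a * q^j)) (fun j => Rmax 1 (a * q^j)) m _)). intros; split; [|lra]. apply Rle_trans with 1; [lra|apply Rmax_l]. }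
    assert (HqE : q * E <= PR) by nra.
    assert (HQ2 := HQb m).
    rewrite Rmult_comm. apply Rmult_le_compat; nra. }
  assert (HX2 : 0 <= X2) by (unfold X2; apply Rle_trans with (t-1); [lra|apply Rmax_l]).
  assert (HX3 : 0 <= X3) by (unfold X3; apply Rle_trans with (1-s); [lra|apply Rmax_l]).
  assert (KEY : q * W <= a^2 * (X2 * X3)).
  { unfold W. destruct (Rle_dec M (b^2)) as [HMb|HMb].
    - rewrite Rmax_left by lra.
      assert (Y2 : Rabs b * q^m <= X2) by apply Rmax_r.
      assert (Y3 : Rabs b * q^(S m) <= X3) by apply Rmax_r.
      assert (Y : (Rabs b * q^m) * (Rabs b * q^(S m)) <= X2 * X3) by (apply Rmult_le_compat; try apply Rmult_le_pos; try apply pow_le; lra).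
      replace ((Rabs b * q^m) * (Rabs b * q^(S m))) with (q * (Rabs b)^2 * (q^m)^2) in Y by (simpl; ring).
      rewrite pow2_abs in Y.
      assert (Hb2 : 0 <= b^2) by apply pow2_ge_0.
      assert (a^2 * (q * b^2 * (q^m)^2) = q * b^2 * t^2) by (unfold t; ring).
      assert (t^2 >= 1) by nra.
      assert (0 <= q*b^2) by (apply Rmult_le_pos; lra).
      assert (0 <= q*b^2*(t^2-1)) by (apply Rmult_le_pos; lra).
      assert (q * b^2 <= q * b^2 * t^2) by (replace (q*b^2*t^2) with (q*b^2 + q*b^2*(t^2-1)) by ring; lra).
      assert (0 <= a^2) by apply pow2_ge_0.
      nra.
    - rewrite Rmax_right by lra.
      assert (Y : M <= X2 * X3) by (unfold M; apply Rmult_le_compat; try apply Rmax_l; lra).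
      assert (1 <= a^2) by nra. nra. }
  assert (Ha2 : 0 < a^2) by (apply pow_lt; lra).
  assert (KEY' : q * W / a^2 <= X2 * X3).
  { apply (Rmult_le_reg_l (a^2)). lra. field_simplify; [|lra]. lra. }
  assert (HQE : 0 <= Q * (q * E)) by (apply Rmult_le_pos; [lra| apply Rmult_le_pos; lra]).
  assert (HX3Q : 0 <= X3 * Q) by (apply Rmult_le_pos; lra).
  assert (HX23Q : 0 <= X2 * (X3 * Q)) by (apply Rmult_le_pos; lra).
  apply Rle_trans with ((Q * (q * E)) * (X2 * (X3 * Q))).
  - replace (Q ^ 2 * q ^ 2 * W * (E / a ^ 2)) with ((Q * (q * E)) * ((q * W / a^2) * Q)) by (field; lra).
    apply Rmult_le_compat_l. exact HQE. replace (X2 * (X3 * Q)) with ((X2 * X3) * Q) by ring. apply Rmult_le_compat_r; lra.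
  - apply Rmult_le_compat. exact HQE. exact HX23Q. exact C1.
    apply Rmult_le_compat. lra. exact HX3Q. exact C2.
    apply Rmult_le_compat; lra.
Qed.


Lemma expkey c u : 0 < c -> exp (-2/c) * exp (c/2 * u^2) <= exp (c*u^2) / (exp u)^2.
Proof. intros Hc. rewrite <- exp_plus.
  replace (exp (c*u^2) / (exp u)^2) with (exp (c*u^2 - 2*u)).
  2:{ unfold Rminus. rewrite exp_plus. replace (-(2*u)) with (-(u+u)) by ring. rewrite exp_Ropp, exp_plus. simpl. field. apply Rgt_not_eq, exp_pos. }
  apply exp_le_mono.
  assert (0 <= c/2 * (u - 2/c)^2) by (apply Rmult_le_pos; [lra|apply pow2_ge_0]).
  assert (c*u^2 - 2*u - (-2/c + c/2*u^2) = c/2 * (u - 2/c)^2) by (field; lra).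
  lra.
Qed.

Theorem lemmaC1 (q : R) (hq0 : 0 < q) (hq1 : q < 1) :
  exists c1 c2 : R, 0 < c1 /\ 0 < c2 /\
  forall (a b : R) (P : C), is_qpoch (a, b) q P ->
    (a <= -1 -> Cmod P >= c1 * exp (c2 * (ln (Rabs a)) ^ 2)) /\
    (a < 1 -> Rabs b > 1 -> Cmod P >= c1 * exp (c2 * (ln (Rabs b)) ^ 2)) /\
    (a > 1 ->
      let alpha := Rceil (logb (/ q) a) - logb (/ q) a in
      Cmod P >= c1 * Rmax (b ^ 2) ((Rpower q (alpha - 1) - 1) * (1 - Rpower q alpha))
                   * exp (c2 * (ln (Rabs a)) ^ 2)).
Proof.
  assert (Hlq : ln q < 0) by (rewrite <- ln_1; apply ln_increasing; lra).
  assert (Hc : 0 < cc q) by (unfold cc; apply Rinv_0_lt_compat; lra).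
  destruct (Qbound q hq0 hq1) as [Q [[HQ HQ1] HQb]].
  set (c := cc q) in *.
  set (e := exp (-2/c)).
  assert (He : 0 < e <= 1).
  { split. apply exp_pos. unfold e. rewrite <- exp_0. apply exp_le_mono.
    assert (0 < 2/c) by (apply Rdiv_lt_0_compat; lra). lra. }
  assert (Hq2 : 0 < q^2 <= 1) by (split; [apply pow_lt|apply pow_le1]; lra).
  assert (HQ2 : 0 < Q^2 <= 1) by (split; [apply pow_lt|apply pow_le1]; lra).
  assert (Hc1Q : Q^2 * q^2 * e <= Q).
  { assert (Q^2 <= Q) by (simpl; nra). assert (q^2 * e <= 1) by nra.
    assert (0 <= Q^2) by lra. nra. }
  exists (Q^2 * q^2 * e), (c/2).
  assert (Hc1 : 0 < Q^2 * q^2 * e) by (repeat apply Rmult_lt_0_compat; lra).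
  split; [exact Hc1|]. split; [lra|].
  intros a b P HP.
  assert (Hexp : forall u, exp (c/2 * u^2) <= exp (c * u^2)).
  { intros u. apply exp_le_mono. assert (0 <= c * u^2) by (apply Rmult_le_pos; [lra|apply pow2_ge_0]). lra. }
  split; [|split].
  - intros Ha. apply Rle_ge. pose proof (case1 q hq0 hq1 a b P HP Ha) as H1. fold c in H1.
    specialize (Hexp (ln (Rabs a))). pose proof (exp_pos (c/2 * ln (Rabs a) ^2)).
    assert (Q^2*q^2*e <= 1) by lra.
    apply Rle_trans with (1 * exp (c/2 * ln (Rabs a)^2)). apply Rmult_le_compat_r. lra. lra. lra.
  - intros Ha Hb. apply Rle_ge. pose proof (case2 q hq0 hq1 Q HQ HQb a b P HP Ha Hb) as H2. fold c in H2.
    specialize (Hexp (ln (Rabs b))). pose proof (exp_pos (c/2 * ln (Rabs b) ^2)).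
    apply Rle_trans with (Q * exp (c * ln (Rabs b) ^ 2)); [|exact H2].
    apply Rmult_le_compat; lra.
  - intros Ha. pose proof (case3 q hq0 hq1 Q HQ HQb a b P HP Ha) as H3. cbv zeta in *. fold c in H3.
    apply Rle_ge. rewrite Rabs_pos_eq by lra.
    set (W := Rmax (b ^ 2) _) in *.
    assert (HW : 0 <= W) by (unfold W; apply Rle_trans with (b^2); [apply pow2_ge_0|apply Rmax_l]).
    eapply Rle_trans; [|exact H3].
    assert (K := expkey c (ln a) Hc). rewrite exp_ln in K by lra. fold e in K.
    replace (Q ^ 2 * q ^ 2 * e * W * exp (c / 2 * ln a ^ 2)) with (Q^2 * q^2 * W * (e * exp (c / 2 * ln a ^ 2))) by ring.
    apply Rmult_le_compat_l; [|exact K].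
    apply Rmult_le_pos; [|exact HW]. apply Rmult_le_pos; lra.
Qed.
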